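(* The $(1,2)$ elitist black-box complexity of $\textsc{OneMax}$ (both Las Vegas and Monte Carlo) is $O(n)$. For any $\lambda\ge 2$, there are $(1,\lambda)$ Las Vegas and Monte Carlo elitist black-box algorithms that need at most $O(n/\log\lambda)$ generations on $\textsc{OneMax}$.
   Context: For $z\in\{0,1\}^n$, $\textsc{Om}_z(x)=n-\sum_{i=1}^n (x_i\oplus z_i)$; $\textsc{OneMax}=\{\textsc{Om}_z : z\in\{0,1\}^n\}$. A $(\mu,\lambda)$ elitist black-box algorithm maintains a multiset $X$ of $\mu$ search points; in each generation it samples $\lambda$ offspring from a distribution depending only on $X$ and the ranking of the fitness values in $X$ (not the values), learns the ranking of the offspring's fitness values, and the new $X$ must consist of $\mu$ offspring of highest fitness (ties broken arbitrarily; parents discarded). Runtime: number of sampled search points until an optimum is first sampled; generations counted analogously. Las Vegas complexity: min over algorithms of max over functions of expected runtime; $p$-Monte Carlo complexity: min over algorithms of smallest $T$ with success within $T$ evaluations with probability $\ge 1-p$ on every function (for every constant $p\in(0,1)$). *)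

(* Defs.v *)
From HB Require Import structures.
From mathcomp Require Import all_boot all_order all_algebra.
From mathcomp Require Import reals exp.
Set Implicit Arguments. Unset Strict Implicit. Unset Printing Implicit Defensive.
Import Order.TTheory GRing.Theory Num.Theory.
Local Open Scope ring_scope.

Definition point (n : nat) := {ffun 'I_n -> bool}.

Definition Om (n : nat) (z x : point n) : nat :=
  (n - \sum_(i < n) ((x i (+) z i) : nat))%N.

Definition optb (n : nat) (f : point n -> nat) (x : point n) : bool :=
  [forall y, (f y <= f x)%N].

Definition offspring (n lam : nat) := {ffun 'I_lam -> point n}.

(* The ranking of the fitness values of the offspring: the comparison
   relation (i,j) |-> f(y_i) <= f(y_j).  The algorithm sees only this. *)
Definition ranking (n lam : nat) (f : point n -> nat) (y : offspring n lam)
  : {ffun 'I_lam * 'I_lam -> bool} :=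
  [ffun ij => (f (y ij.1) <= f (y ij.2))%N].

(* A (1,lam) elitist black-box algorithm (mu = 1, so the ranking of X is trivial):
   - init   : distribution of the initial search point;
   - offs x : joint distribution of the lam offspring, depending only on the
              current point x;
   - sel x y rk : distribution of the index of the offspring that becomes the
              new current point, depending on x, the offspring y and their
              ranking rk; it must be an offspring of highest fitness
              (ties broken arbitrarily, i.e. as the algorithm chooses). *)
Record alg (R : realType) (n lam : nat) := Alg {
  init : point n -> R;
  offs : point n -> offspring n lam -> R;
  sel  : point n -> offspring n lam -> {ffun 'I_lam * 'I_lam -> bool} -> 'I_lam -> R
}.

Definition valid (R : realType) (n lam : nat) (A : alg R n lam) : Prop :=
  [/\ (forall x, 0 <= init A x) /\ \sum_x init A x = 1,
      (forall x y, 0 <= offs A x y) /\ (forall x, \sum_y offs A x y = 1),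
      (forall x y rk i, 0 <= sel A x y rk i) /\ (forall x y rk, \sum_i sel A x y rk i = 1)
    & forall (f : point n -> nat) x y i, 0 < sel A x y (ranking f y) i ->
        forall j, (f (y j) <= f (y i))%N].

(* surv A f t r x : probability, when the current point is x, that no optimum
   of f is sampled during the next t generations nor among the first r
   offspring of the generation after them. *)
Fixpoint surv (R : realType) (n lam : nat) (A : alg R n lam) (f : point n -> nat)
    (t r : nat) (x : point n) {struct t} : R :=
  match t with
  | O => \sum_(y : offspring n lam) offs A x y *
           (if [forall i : 'I_lam, (i < r)%N ==> ~~ optb f (y i)] then 1 else 0)
  | t'.+1 => \sum_(y : offspring n lam) offs A x y *
           ((if [forall i : 'I_lam, ~~ optb f (y i)] then 1 else 0) *
            \sum_(i : 'I_lam) sel A x y (ranking f y) i * surv A f t' r (y i))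
  end.

(* Generations: G = 0 if the initial point is optimal, otherwise the index of
   the first generation in which an optimum is sampled.  tailG t = P(G > t). *)
Definition tailG (R : realType) (n lam : nat) (A : alg R n lam) (f : point n -> nat)
    (t : nat) : R :=
  \sum_x init A x * (if optb f x then 0 else 1) * surv A f t 0 x.

(* Runtime T = number of sampled search points (initial point included) until
   an optimum is first sampled.  tailE k = P(T > k). *)
Definition tailE (R : realType) (n lam : nat) (A : alg R n lam) (f : point n -> nat)
    (k : nat) : R :=
  match k with
  | O => 1
  | k'.+1 => \sum_x init A x * (if optb f x then 0 else 1) *
               surv A f (k' %/ lam) (k' %% lam) x
  end.

(* Main.v *)
Require Import Defs.
From HB Require Import structures.
From mathcomp Require Import all_boot all_order all_algebra.
From mathcomp Require Import reals exp.
From mathcomp Require Import ring lra zify.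
Set Implicit Arguments. Unset Strict Implicit. Unset Printing Implicit Defensive.
Import Order.TTheory GRing.Theory Num.Theory.
Local Open Scope ring_scope.

Section Alg.
Variable R : realType.
Variables (n l b : nat).
Local Notation lam := l.+1.

Definition stage (x : point n) : nat := (\max_(j < n | x j) j)%N.
Definition stt (i : nat) (p : point n) : point n :=
  [ffun j : 'I_n => if (j < i)%N then p j else (j == i :> nat)].
Definition w0 : b.-tuple bool := [tuple of nseq b false].
Definition gs (g : 'I_lam) : b.-tuple bool := nth w0 (enum {: b.-tuple bool}) g.
Definition Yp (x : point n) (g : 'I_lam) : point n :=
  [ffun j : 'I_n => if (j < stage x)%N then x j
     else if (j < stage x + b)%N then nth false (gs g) (j - stage x)
     else (j == stage x + b :> nat)].
Definition Yt (x : point n) : offspring n lam := [ffun g => Yp x g].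
Definition chs (rk : {ffun 'I_lam * 'I_lam -> bool}) : 'I_lam :=
  odflt ord0 [pick i | [forall j, rk (j, i)]].
Definition dirac (T : finType) (a : T) : T -> R := fun y => if y == a then 1 else 0.
Definition x0 : point n := stt 0 [ffun=> false].
Definition myA : alg R n lam :=
  Alg (dirac x0) (fun x => dirac (Yt x)) (fun x y rk => dirac (chs rk)).

Lemma sum_dirac (T : finType) (a : T) (F : T -> R) : \sum_y dirac a y * F y = F a.
Proof.
rewrite (bigD1 a) //= /dirac eqxx mul1r big1 ?addr0 // => y /negbTE ->.
by rewrite mul0r.
Qed.

Lemma sum_dirac1 (T : finType) (a : T) : \sum_y dirac a y = 1.
Proof. have := sum_dirac a (fun=> 1); by under eq_bigr do rewrite mulr1. Qed.

Lemma dirac_ge0 (T : finType) (a y : T) : 0 <= dirac a y.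
Proof. by rewrite /dirac; case: eqP. Qed.

Lemma chs_max (f : point n -> nat) (y : offspring n lam) j :
  (f (y j) <= f (y (chs (ranking f y))))%N.
Proof.
rewrite /chs; case: pickP => [i /forallP H | H] /=.
  by have := H j; rewrite ffunE.
exfalso.
have [i0 _ Hm] := @arg_maxnP _ ord0 xpredT (fun i => f (y i)) isT.
have := H i0; move/negbT/forallPn => [j0]; rewrite ffunE /=; have := Hm j0 isT; by move=> /= ->.
Qed.

Lemma myA_valid : valid myA.
Proof.
split.
- by split; [move=> x; apply: dirac_ge0 | apply: sum_dirac1].
- by split; [move=> x y; apply: dirac_ge0 | move=> x; apply: sum_dirac1].
- by split; [move=> *; apply: dirac_ge0 | move=> *; apply: sum_dirac1].
- move=> f x y i /=; rewrite /dirac; case: eqP => [-> _ | _]; last by rewrite ltxx.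
  move=> j; exact: chs_max.
Qed.

Lemma survS f t r x : surv myA f t.+1 r x =
  (if [forall g, ~~ optb f (Yt x g)] then 1 else 0) *
  surv myA f t r (Yt x (chs (ranking f (Yt x)))).
Proof.
rewrite /= sum_dirac; congr (_ * _).
exact: (sum_dirac (chs (ranking f (Yt x))) (fun i => surv myA f t r (Yt x i))).
Qed.

Lemma surv01 f t r x : 0 <= surv myA f t r x <= 1.
Proof.
elim: t x => [|t IH] x.
  by rewrite /= sum_dirac; case: ifP => _; rewrite ?ler01 ?lexx.
rewrite survS; case: ifP => _; first by rewrite mul1r.
by rewrite mul0r lexx ler01.
Qed.


Implicit Types (z p q x : point n).

Lemma sumb_le (c : 'I_n -> bool) : (\sum_(i < n) (c i : nat) <= n)%N.
Proof.
apply: (@leq_trans (\sum_(i < n) 1)%N); first by apply: leq_sum => i _; exact: leq_b1.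
by rewrite sum_nat_const card_ord muln1.
Qed.

Lemma Om_self z : Om z z = n.
Proof. by rewrite /Om big1 ?subn0 // => i _; rewrite addbb. Qed.

Lemma optbOm z x : optb (Om z) x = (x == z).
Proof.
apply/idP/eqP => [/forallP/(_ z)|->]; last first.
  apply/forallP => y; rewrite Om_self /Om; exact: leq_subr.
rewrite Om_self /Om => H.
have Hs := sumb_le (fun i => x i (+) z i).
have H0 : (\sum_(i < n) (x i (+) z i : nat) = 0)%N by lia.
apply/ffunP => j; move/eqP: H0; rewrite sum_nat_eq0 => /forallP/(_ j)/implyP/(_ isT).
by case: (x j); case: (z j).
Qed.

Lemma stage_stt i p : (i < n)%N -> stage (stt i p) = i.
Proof.
move=> Hi; apply/eqP; rewrite eqn_leq; apply/andP; split.
  apply/bigmax_leqP => j; rewrite ffunE; case: ltnP => [/ltnW //|_].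
  by move/eqP => ->.
have := @leq_bigmax_cond _ (fun j : 'I_n => stt i p j) (fun j => nat_of_ord j) (Ordinal Hi).
by rewrite ffunE ltnn eqxx => /(_ isT).
Qed.

Lemma stt_big k p : (n <= k)%N -> stt k p = p.
Proof. move=> Hk; apply/ffunP => j; rewrite ffunE. by have -> : (j < k)%N by apply: leq_trans (ltn_ord j) Hk. Qed.

Lemma stt0 p q : stt 0 p = stt 0 q.
Proof. by apply/ffunP => j; rewrite !ffunE. Qed.

Definition wz i (z : point n) : b.-tuple bool := [tuple nth false (fgraph z) (i + k) | k < b].

Lemma exists_g i z : (2 ^ b <= lam)%N -> exists g, gs g = wz i z.
Proof.
move=> Hb.
have Hin : wz i z \in enum {: b.-tuple bool} by rewrite mem_enum.
have Hlt : (index (wz i z) (enum {: b.-tuple bool}) < lam)%N.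
  apply: leq_trans Hb; have -> : (2 ^ b = #|{: b.-tuple bool}|)%N by rewrite card_tuple card_bool.
  rewrite cardE.
  by rewrite index_mem.
by exists (Ordinal Hlt); rewrite /gs /= nth_index.
Qed.

Lemma Ystar i z g : (i < n)%N -> gs g = wz i z -> Yp (stt i z) g = stt (i + b) z.
Proof.
move=> Hi Hg; apply/ffunP => j; rewrite !ffunE stage_stt // Hg.
case: (ltnP j i) => h1; first by rewrite (leq_trans h1 (leq_addr _ _)).
case: (ltnP j (i + b)) => h2 //.
have Hk : (j - i < b)%N by lia.
have := nth_mktuple (fun k : 'I_b => nth false (fgraph z) (i + k)) false (Ordinal Hk).
rewrite /wz /= => ->; by rewrite subnKC // nth_fgraph_ord.
Qed.

Lemma sum_eq_pw (I : finType) (a c : I -> nat) :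
  (forall j, a j <= c j)%N -> (\sum_j c j <= \sum_j a j)%N -> forall j, a j = c j.
Proof.
move=> le hs j; apply/eqP; rewrite eqn_leq le /=; move: hs.
rewrite (bigD1 j) //= [X in (_ <= X)%N](bigD1 j) //= => h.
have : (\sum_(k | k != j) a k <= \sum_(k | k != j) c k)%N by apply: leq_sum.
lia.
Qed.

Lemma next_stt i z : (i < n)%N -> (2 ^ b <= lam)%N ->
  Yt (stt i z) (chs (ranking (Om z) (Yt (stt i z)))) = stt (i + b) z.
Proof.
move=> Hi Hb; have [gst Hg] := exists_g i z Hb.
set x := stt i z; set g' := chs _.
have Hm := chs_max (Om z) (Yt x) gst.
rewrite -/g' !ffunE Ystar // in Hm *.
set s := stt (i + b) z in Hm *.
have Hpw : forall j : 'I_n, (j < i + b)%N || (Yp x g' j == s j).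
  move=> j; case: ltnP => //= h; rewrite /x /s !ffunE stage_stt //.
  by rewrite ltnNge (leq_trans (leq_addr _ _) h) /= ltnNge h.
have Hle : forall j : 'I_n, ((s j (+) z j : nat) <= (Yp x g' j (+) z j : nat))%N.
  move=> j; case/orP: (Hpw j) => [h|/eqP -> //].
  by rewrite /s ffunE h addbb.
have Hsum : (\sum_(j : 'I_n) (Yp x g' j (+) z j : nat) <= \sum_(j : 'I_n) (s j (+) z j : nat))%N.
  move: Hm; rewrite /Om.
  have := sumb_le (fun j => Yp x g' j (+) z j); lia.
have Heq := sum_eq_pw Hle Hsum.
apply/ffunP => j; move: (Heq j).
by case: (Yp x g' j); case: (s j); case: (z j).
Qed.

Lemma vanish z r : (0 < b)%N -> (2 ^ b <= lam)%N -> forall t i, (i < n)%N ->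
  (n - i <= t.+1 * b)%N -> surv myA (Om z) t.+1 r (stt i z) = 0.
Proof.
move=> Hb0 Hb; elim=> [|t IH] i Hi Hle; rewrite survS.
  case: (leqP n (i + b)) => Hib; last by lia.
  have [g Hg] := exists_g i z Hb.
  have -> : [forall g, ~~ optb (Om z) (Yt (stt i z) g)] = false; last by rewrite mul0r.
  apply: negbTE; apply/negP => /forallP/(_ g).
  by rewrite ffunE Ystar // stt_big // optbOm eqxx.
case: (leqP n (i + b)) => Hib.
  have [g Hg] := exists_g i z Hb.
  have -> : [forall g, ~~ optb (Om z) (Yt (stt i z) g)] = false; last by rewrite mul0r.
  apply: negbTE; apply/negP => /forallP/(_ g).
  by rewrite ffunE Ystar // stt_big // optbOm eqxx.
rewrite next_stt // IH ?mulr0 //; rewrite mulSn in Hle; lia.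
Qed.

Lemma tailG_eq z t : tailG myA (Om z) t =
  (if optb (Om z) x0 then 0 else 1) * surv myA (Om z) t 0 x0.
Proof.
rewrite /tailG /=; under eq_bigr do rewrite -mulrA.
exact: (sum_dirac x0 (fun x => (if optb (Om z) x then 0 else 1) * surv myA (Om z) t 0 x)).
Qed.

Lemma tailE_eq z k : tailE myA (Om z) k.+1 =
  (if optb (Om z) x0 then 0 else 1) * surv myA (Om z) (k %/ lam) (k %% lam) x0.
Proof.
rewrite /tailE /=; under eq_bigr do rewrite -mulrA.
exact: (sum_dirac x0 (fun x => (if optb (Om z) x then 0 else 1) * surv myA (Om z) _ _ x)).
Qed.

Lemma ind_surv_le1 (c : bool) f t r x : (if c then 0 else 1) * surv myA f t r x <= 1.
Proof. case: c; rewrite ?mul0r ?ler01 // mul1r; by case/andP: (surv01 f t r x). Qed.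

Lemma x0_stt z : x0 = stt 0 z.
Proof. exact: stt0. Qed.

End Alg.

Lemma sum_tail (R : realType) (a : nat -> R) G : (forall k, a k <= 1) ->
  (forall k, (G <= k)%N -> a k = 0) -> forall N, \sum_(k < N) a k <= G%:R.
Proof.
move=> H1 H0 N.
suff : \sum_(k < N) a k <= (minn N G)%:R.
  by move=> h; apply: le_trans h _; rewrite ler_nat geq_minr.
elim: N => [|N IH]; first by rewrite big_ord0.
rewrite big_ord_recr /=; case: (ltnP N G) => h.
  rewrite (minn_idPl (ltnW h)) in IH; rewrite (minn_idPl h) -addn1 natrD.
  exact: lerD.
rewrite H0 // addr0; rewrite (minn_idPr h) in IH.
by rewrite (minn_idPr (leq_trans h (leqnSn _))).
Qed.

Lemma Gbound (R : realType) n l : (1 < l.+1)%N ->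
  ((n %/ trunc_log 2 l.+1).+1)%:R <= 3 * Num.max 1 (n%:R / ln ((l.+1)%:R : R)) :> R.
Proof.
move=> Hl; set b := trunc_log 2 l.+1.
have Hb0 : (0 < b)%N by rewrite trunc_log_gt0.
have Hlt : (l.+1 < 2 ^ b.+1)%N by apply: trunc_log_ltn.
set L := ln _.
have HL : 0 < L by apply: ln_gt0; rewrite ltr1n.
have Hln2 : ln (2:R) <= 1.
  have := @le_ln1Dx R 1 ltac:(lra).
  by rewrite (_ : 1 + 1 = 2 :> R) //; lra.
have HLb : L <= b%:R + 1.
  apply: (@le_trans _ _ (ln ((2:R) ^+ b.+1))).
    rewrite ler_ln ?posrE ?ltr0n ?exprn_gt0 //.
    by rewrite -natrX ler_nat ltnW.
  rewrite lnXn // -(mulr_natr (ln (2:R))) -natr1.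
  have hb : 0 <= b%:R :> R by rewrite ler0n.
  nra.
have Hq : (n %/ b)%:R * b%:R <= n%:R :> R by rewrite -natrM ler_nat leq_trunc_div.
have Hb1 : 1 <= b%:R :> R by rewrite ler1n.
have Hq0 : 0 <= (n %/ b)%:R :> R by rewrite ler0n.
set q := (n %/ b)%:R in Hq Hq0 *.
have HqL : q * L <= 2 * n%:R by nra.
have Hq2 : q <= 2 * (n%:R / L) by rewrite mulrA ler_pdivlMr.
have M1 : 1 <= Num.max 1 (n%:R / L) by rewrite le_max lexx.
have M2 : n%:R / L <= Num.max 1 (n%:R / L) by rewrite le_max lexx orbT.
rewrite -addn1 natrD -/q; lra.
Qed.

Lemma tailE2_zero (R : realType) n (z : point n) k : (0 < n)%N -> ((2 * n).+1 <= k)%N ->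
  tailE (myA R n 1 1) (Om z) k = 0.
Proof.
move=> Hn; case: k => [|k] Hk; first by lia.
rewrite tailE_eq (x0_stt z).
have : (n <= (k %/ 2)%N)%N by rewrite leq_divRL //; lia.
case: (k %/ 2)%N => [|t] H; first by lia.
by rewrite vanish ?mulr0 //; lia.
Qed.

Lemma tailE2_le1 (R : realType) n (z : point n) k : tailE (myA R n 1 1) (Om z) k <= 1.
Proof. case: k => [|k]; first by rewrite /= lexx. rewrite tailE_eq; exact: ind_surv_le1. Qed.

Lemma tailG_zero (R : realType) n l (z : point n) t : (0 < n)%N -> (1 < l.+1)%N ->
  ((n %/ trunc_log 2 l.+1)%N.+1 <= t)%N ->
  tailG (myA R n l (trunc_log 2 l.+1)) (Om z) t = 0.
Proof.
move=> Hn Hl; set b := trunc_log 2 l.+1.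
have Hb0 : (0 < b)%N by rewrite trunc_log_gt0.
have Hb : (2 ^ b <= l.+1)%N by apply: trunc_logP.
case: t => [|t] Ht; first by [].
rewrite tailG_eq (x0_stt z) vanish ?mulr0 //.
rewrite subn0; apply: leq_trans (ltnW (ltn_ceil n Hb0)) _; exact: leq_mul Ht (leqnn b).
Qed.

Lemma tailG_le1 (R : realType) n l b (z : point n) t : tailG (myA R n l b) (Om z) t <= 1.
Proof. rewrite tailG_eq; exact: ind_surv_le1. Qed.

Theorem corollary2 (R : realType) :
  (* (1,2) Las Vegas: O(n) expected evaluations *)
  (exists C : R, forall n : nat, (0 < n)%N ->
     exists A : alg R n 2, valid A /\
       forall (z : point n) (N : nat), \sum_(k < N) tailE A (Om z) k <= C * n%:R)
  /\
  (* (1,2) p-Monte Carlo: O(n) evaluations, for every constant p in (0,1) *)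
  (forall p : R, 0 < p < 1 -> exists C : nat, forall n : nat, (0 < n)%N ->
     exists A : alg R n 2, valid A /\
       forall z : point n, tailE A (Om z) (C * n)%N <= p)
  /\
  (* (1,lam) Las Vegas: O(n / log lam) expected generations *)
  (exists C : R, forall n lam : nat, (0 < n)%N -> (2 <= lam)%N ->
     exists A : alg R n lam, valid A /\
       forall (z : point n) (N : nat),
         \sum_(t < N) tailG A (Om z) t <= C * Num.max 1 (n%:R / ln lam%:R))
  /\
  (* (1,lam) p-Monte Carlo: O(n / log lam) generations *)
  (forall p : R, 0 < p < 1 -> exists C : R, forall n lam : nat, (0 < n)%N -> (2 <= lam)%N ->
     exists A : alg R n lam, valid A /\
       exists t : nat, t%:R <= C * Num.max 1 (n%:R / ln lam%:R) /\
         forall z : point n, tailG A (Om z) t <= p).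
Proof.
split; [|split; [|split]].
- exists 3 => n Hn; exists (myA R n 1 1); split; first exact: myA_valid.
  move=> z N; apply: (le_trans (sum_tail (G := (2 * n).+1) (fun k => tailE2_le1 _ z k) (fun k => @tailE2_zero _ _ z k Hn) N)).
  by rewrite -natrM ler_nat; lia.
- move=> p /andP [Hp0 _]; exists 3%N => n Hn; exists (myA R n 1 1); split; first exact: myA_valid.
  by move=> z; rewrite tailE2_zero //; [exact: ltW | lia].
- exists 3 => n [|l] Hn Hl //; exists (myA R n l (trunc_log 2 l.+1)); split; first exact: myA_valid.
  move=> z N; apply: (le_trans (sum_tail (G := (n %/ trunc_log 2 l.+1)%N.+1) (fun k => tailG_le1 _ _ _ z k) (fun k => @tailG_zero _ _ _ z k Hn Hl) N)).
  exact: Gbound.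
- move=> p /andP [Hp0 _]; exists 3 => n [|l] Hn Hl //.
  exists (myA R n l (trunc_log 2 l.+1)); split; first exact: myA_valid.
  exists (n %/ trunc_log 2 l.+1)%N.+1; split; first exact: Gbound.
  by move=> z; rewrite tailG_zero //; exact: ltW.
Qed.
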